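(* Assume $\epsilon\in(0,1/3)$, $p\ge2$, $\nu>0$, $T\ge 4\max\{\log\frac1{1-\epsilon},\log p\}$, and the inlier stability condition. Let $\delta_T=4\nu\big(\sqrt{\log(1/(1-\epsilon))/T}+\sqrt{\log p/T}\big)$. Let $\hat\mu^{[1]}\in\operatorname{conv}\{g_1,\dots,g_N\}$ and, for $s\ge1$, let $\bar w^{[s]}\in\Delta_{N,\epsilon}$ satisfy $\gamma(\bar w^{[s]};\hat\mu^{[s]})\le\mathrm{OPT}(\hat\mu^{[s]})+\delta_T$ (this holds when $\bar w^{[s]}$ is the output of the MW–MMW rounds with center $\hat\mu^{[s]}$, uniform initialization, $\eta_w=\frac1\nu\sqrt{\log(1/(1-\epsilon))/T}$, $\eta_\rho=\frac1\nu\sqrt{\log p/T}$), and set $\hat\mu^{[s+1]}=\sum_{n=1}^N\bar w^{[s]}_ng_n$. Let $e^{[s]}=\|\hat\mu^{[s]}-\mu_g\|_2$ and $\alpha_\epsilon=\sqrt{\epsilon/(1-2\epsilon)}$. Then for all $s\ge1$, $$e^{[s+1]}\le\alpha_\epsilon e^{[s]}+R_{\epsilon,T},\qquad R_{\epsilon,T}=(1+\alpha_\epsilon)\delta_\mu+\alpha_\epsilon\sqrt{\|\Sigma_g\|_{op}+\delta_\Sigma+\delta_T}.$$ Consequently $e^{[s]}\le\alpha_\epsilon^{s-1}e^{[1]}+\frac{1-\alpha_\epsilon^{s-1}}{1-\alpha_\epsilon}R_{\epsilon,T}$ for all $s\ge1$, and $\limsup_{s\to\infty}e^{[s]}\le 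R_\infty:=\frac{R_{\epsilon,T}}{1-\alpha_\epsilon}$.
   Context: Fix $N\ge1$, $p\ge1$, $\epsilon\in[0,1)$ and vectors $g_1,\dots,g_N\in\mathbb R^p$; $\nu=\max_{i,j}\|g_i-g_j\|_2^2$. For an index set $I$ and $\epsilon'\in[0,1)$, $\Delta_{I,\epsilon'}=\{w\in\mathbb R^{I}:\sum_{n\in I}w_n=1,\ 0\le w_n\le\frac1{(1-\epsilon')|I|}\}$, and $\Delta_{N,\epsilon}=\Delta_{[N],\epsilon}$. Density matrices $\mathfrak D_p=\{\rho\succeq0\text{ symmetric},\mathrm{Tr}\,\rho=1\}$, $\langle A,B\rangle=\mathrm{Tr}(A^\top B)$. For $\hat\mu\in\mathbb R^p$: $S(w;\hat\mu)=\sum_n w_n(g_n-\hat\mu)(g_n-\hat\mu)^\top$, $\gamma(w;\hat\mu)=\|S(w;\hat\mu)\|_{op}$, $\mathrm{OPT}(\hat\mu)=\min_{w\in\Delta_{N,\epsilon}}\max_{\rho\in\mathfrak D_p}\langle S(w;\hat\mu),\rho\rangle$. MW–MMW rounds for center $\hat\mu$: $z_n=g_n-\hat\mu$, $w^{(1)}=(1/N,\dots,1/N)$; for $t=1,\dots,T$: $S^{(t)}=\sum_nw^{(t)}_nz_nz_n^\top$, $\rho^{(t)}=\exp(\eta_\rho\sum_{t'\le t}S^{(t')})/\mathrm{Tr}\exp(\eta_\rho\sum_{t'\le t}S^{(t')})$, $m^{(t)}_n=z_n^\top\rho^{(t)}z_n$, $\tilde w^{(t)}_n=w^{(t)}_n(1-\eta_wm^{(t)}_n)$,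 $w^{(t+1)}=\arg\min_{w\in\Delta_{N,\epsilon}}\sum_nw_n\log(w_n/\tilde w^{(t)}_n)$; output $\bar w=\frac1T\sum_tw^{(t)}$. Inlier stability condition: there is a partition $[N]=I_{in}\sqcup I_{out}$ with $|I_{out}|\le\epsilon N$, a vector $\mu_g\in\mathbb R^p$, a symmetric PSD $\Sigma_g$ and constants $\delta_\mu,\delta_\Sigma\ge0$ such that for every $w\in\Delta_{I_{in},\epsilon/(1-\epsilon)}$: $\|\sum_{n\in I_{in}}w_n(g_n-\mu_g)\|_2\le\delta_\mu$ and $\sum_{n\in I_{in}}w_n(g_n-\mu_g)(g_n-\mu_g)^\top\preceq\Sigma_g+\delta_\Sigma I_p$. *)

(* Defs.v *)
From HB Require Import structures.
From mathcomp Require Import all_boot all_order all_algebra.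
From mathcomp Require Import all_classical all_reals all_analysis.
Set Implicit Arguments. Unset Strict Implicit. Unset Printing Implicit Defensive.
Import Order.TTheory GRing.Theory Num.Theory.
Local Open Scope classical_set_scope.
Local Open Scope ring_scope.

Section Defs.
Variable R : realType.

Definition norm2 (p : nat) (x : 'cV[R]_p) : R := Num.sqrt (\sum_i (x i 0) ^+ 2).

Definition qform (p : nat) (M : 'M[R]_p) (x : 'cV[R]_p) : R := (x^T *m M *m x) 0 0.

Definition psd (p : nat) (M : 'M[R]_p) : Prop := forall x : 'cV[R]_p, 0 <= qform M x.

Definition loewner_le (p : nat) (A B : 'M[R]_p) : Prop := psd (B - A).

Definition opnorm (p : nat) (A : 'M[R]_p) : R :=
  sup [set norm2 (A *m x) | x in [set x : 'cV[R]_p | norm2 x <= 1]].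

Definition frob (p : nat) (A B : 'M[R]_p) : R := \tr (A^T *m B).

Definition density (p : nat) (rho : 'M[R]_p) : Prop :=
  rho^T = rho /\ psd rho /\ \tr rho = 1.

(* capped simplex Delta_{I,eps'} on an index set I of [N]; weights are
   functions on 'I_N of which only the values on I matter *)
Definition capped_simplex (N : nat) (I : {set 'I_N}) (eps' : R) (w : 'I_N -> R) : Prop :=
  \sum_(n in I) w n = 1 /\
  (forall n, n \in I -> 0 <= w n /\ w n <= 1 / ((1 - eps') * #|I|%:R)).

Definition DeltaN (N : nat) (eps : R) (w : 'I_N -> R) : Prop :=
  capped_simplex [set: 'I_N] eps w.

Definition Smat (N p : nat) (g : 'I_N -> 'cV[R]_p) (w : 'I_N -> R) (mu : 'cV[R]_p)
  : 'M[R]_p := \sum_n w n *: ((g n - mu) *m (g n - mu)^T).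

Definition gammaS (N p : nat) (g : 'I_N -> 'cV[R]_p) (w : 'I_N -> R) (mu : 'cV[R]_p) : R :=
  opnorm (Smat g w mu).

(* OPT(mu) = min_{w in Delta_{N,eps}} max_{rho in D_p} <S(w;mu), rho>
   (min/max written as inf/sup; they are attained by compactness) *)
Definition OPT (N p : nat) (eps : R) (g : 'I_N -> 'cV[R]_p) (mu : 'cV[R]_p) : R :=
  inf [set sup [set frob (Smat g w mu) rho | rho in [set rho | density rho]]
      | w in [set w | DeltaN eps w]].

Definition nuG (N p : nat) (g : 'I_N -> 'cV[R]_p) : R :=
  \big[Num.max/0]_(i < N) \big[Num.max/0]_(j < N) (norm2 (g i - g j)) ^+ 2.

Definition in_conv (N p : nat) (g : 'I_N -> 'cV[R]_p) (mu : 'cV[R]_p) : Prop :=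
  exists lam : 'I_N -> R, (forall n, 0 <= lam n) /\ \sum_n lam n = 1 /\
                          mu = \sum_n lam n *: g n.

Definition inlier_stable (N p : nat) (eps : R) (g : 'I_N -> 'cV[R]_p)
  (Iin : {set 'I_N}) (mug : 'cV[R]_p) (Sigmag : 'M[R]_p) (dmu dSigma : R) : Prop :=
  (#|~: Iin|%:R <= eps * N%:R) /\
  Sigmag^T = Sigmag /\ psd Sigmag /\ 0 <= dmu /\ 0 <= dSigma /\
  forall w : 'I_N -> R, capped_simplex Iin (eps / (1 - eps)) w ->
    norm2 (\sum_(n in Iin) w n *: (g n - mug)) <= dmu /\
    loewner_le (\sum_(n in Iin) w n *: ((g n - mug) *m (g n - mug)^T))
               (Sigmag + dSigma%:M).

Definition deltaT (eps nu : R) (p T : nat) : R :=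
  4 * nu * (Num.sqrt (ln (1 / (1 - eps)) / T%:R) + Num.sqrt (ln p%:R / T%:R)).

Definition alpha_eps (eps : R) : R := Num.sqrt (eps / (1 - 2 * eps)).

End Defs.

(* Main.v *)
Require Import Defs.
From HB Require Import structures.
From mathcomp Require Import all_boot all_order all_algebra.
From mathcomp Require Import all_classical all_reals all_analysis.
From mathcomp Require Import ring lra zify.
Import Order.TTheory GRing.Theory Num.Theory.
Local Open Scope classical_set_scope.
Local Open Scope ring_scope.
Set Implicit Arguments. Unset Strict Implicit. Unset Printing Implicit Defensive.
Section L1.
Variable R : realType.

Definition dot (p : nat) (x y : 'cV[R]_p) : R := \sum_i x i 0 * y i 0.

Lemma wCS (I : finType) (P : pred I) (w a b : I -> R) :
  (forall i, P i -> 0 <= w i) ->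
  (\sum_(i | P i) w i * a i * b i) ^+ 2 <=
  (\sum_(i | P i) w i * a i ^+ 2) * (\sum_(i | P i) w i * b i ^+ 2).
Proof.
move=> w0.
set A := \sum_(i | P i) w i * a i ^+ 2.
set B := \sum_(i | P i) w i * b i ^+ 2.
set X := \sum_(i | P i) w i * a i * b i.
have B0 : 0 <= B by apply: sumr_ge0 => i Pi; apply: mulr_ge0; [exact: w0|exact: sqr_ge0].
have key : 0 <= \sum_(i | P i) w i * (B * a i - X * b i) ^+ 2.
  by apply: sumr_ge0 => i Pi; apply: mulr_ge0; [exact: w0|exact: sqr_ge0].
have E : forall c1 c2 : R, \sum_(i | P i) w i * (c1 * a i - c2 * b i) ^+ 2 =
   c1 ^+ 2 * \sum_(i | P i) w i * a i ^+ 2 - 2 * c1 * c2 * \sum_(i | P i) w i * a i * b i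
   + c2 ^+ 2 * \sum_(i | P i) w i * b i ^+ 2.
  move=> c1 c2; rewrite !mulr_sumr -!sumrB -big_split /=.
  by apply: eq_bigr => i _; ring.
rewrite E in key.
have [Bz|Bp] := eqVneq B 0.
  have hb : forall i, P i -> w i * b i ^+ 2 = 0.
    by apply/psumr_eq0P => // i Pi; apply: mulr_ge0; [exact: w0|exact: sqr_ge0].
  have -> : X = 0.
    rewrite /X big1 // => i Pi; have := hb i Pi.
    move/eqP; rewrite mulf_eq0 sqrf_eq0 => /orP[]/eqP->; ring.
  rewrite Bz; lra.
have Bp' : 0 < B by rewrite lt0r Bp B0.
have : 0 <= B * (A * B - X ^+ 2).
  by have -> : B * (A * B - X ^+ 2) = B ^+ 2 * A - 2 * B * X * X + X ^+ 2 * B by ring.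
rewrite pmulr_rge0 //; lra.
Qed.

Lemma sqr_le_abs (a b : R) : 0 <= b -> a ^+ 2 <= b ^+ 2 -> a <= b.
Proof.
move=> b0 h; apply: (le_trans (ler_norm a)).
by rewrite -sqrtr_sqr -[b]ger0_norm // -sqrtr_sqr ler_sqrt // sqr_ge0.
Qed.

Lemma CS (I : finType) (P : pred I) (a b : I -> R) :
  (\sum_(i | P i) a i * b i) ^+ 2 <=
  (\sum_(i | P i) a i ^+ 2) * (\sum_(i | P i) b i ^+ 2).
Proof.
have := @wCS I P (fun _ => 1) a b (fun _ _ => ler01).
by under eq_bigr do rewrite mul1r; under [X in _ <= X * _]eq_bigr do rewrite mul1r;
   under [X in _ <= _ * X]eq_bigr do rewrite mul1r.
Qed.

Lemma norm2_ge0 p (x : 'cV[R]_p) : 0 <= norm2 x.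
Proof. exact: sqrtr_ge0. Qed.

Lemma norm2_sqr p (x : 'cV[R]_p) : norm2 x ^+ 2 = \sum_i x i 0 ^+ 2.
Proof. by rewrite sqr_sqrtr // sumr_ge0 // => i _; exact: sqr_ge0. Qed.

Lemma dot_le p (x y : 'cV[R]_p) : dot x y <= norm2 x * norm2 y.
Proof.
apply: sqr_le_abs; first by rewrite mulr_ge0 // norm2_ge0.
rewrite exprMn !norm2_sqr /dot.
exact: (@CS 'I_p predT (fun i => x i 0) (fun i => y i 0)).
Qed.

Lemma dot_abs_le p (x y : 'cV[R]_p) : `|dot x y| <= norm2 x * norm2 y.
Proof.
rewrite ler_norml dot_le andbT.
have := dot_le (- x) y.
have -> : dot (- x) y = - dot x y.
  by rewrite /dot -sumrN; apply: eq_bigr => i _; rewrite mxE mulNr.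
have -> : norm2 (- x) = norm2 x.
  by rewrite /norm2; congr Num.sqrt; apply: eq_bigr => i _; rewrite mxE sqrrN.
lra.
Qed.

End L1.
Section L2.
Variable R : realType.
Variable p : nat.
Implicit Types (M P rho : 'M[R]_p) (x y z : 'cV[R]_p).

Definition bil M x y : R := \sum_i \sum_j x i 0 * M i j * y j 0.

Lemma qformE M x : qform M x = bil M x x.
Proof.
rewrite /qform /bil mxE; under eq_bigr do rewrite mxE mulr_suml.
rewrite exchange_big /=; apply: eq_bigr => i _; apply: eq_bigr => j _.
by rewrite mxE.
Qed.

Lemma frobE (A B : 'M[R]_p) : frob A B = \sum_i \sum_j A i j * B i j.
Proof.
rewrite /frob /mxtrace; under eq_bigr do rewrite mxE.
rewrite exchange_big /=; apply: eq_bigr => i _; apply: eq_bigr => j _.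
by rewrite mxE.
Qed.

Lemma sum2D (f g : 'I_p -> 'I_p -> R) :
  \sum_i \sum_j (f i j + g i j) = \sum_i \sum_j f i j + \sum_i \sum_j g i j.
Proof. by rewrite -big_split; apply: eq_bigr => i _; rewrite big_split. Qed.

Lemma sum2Z (c : R) (f : 'I_p -> 'I_p -> R) :
  \sum_i \sum_j (c * f i j) = c * \sum_i \sum_j f i j.
Proof. by rewrite mulr_sumr; apply: eq_bigr => i _; rewrite mulr_sumr. Qed.

Lemma sum2N (f : 'I_p -> 'I_p -> R) :
  \sum_i \sum_j (- f i j) = - \sum_i \sum_j f i j.
Proof. by rewrite -sumrN; apply: eq_bigr => i _; rewrite sumrN. Qed.

Lemma qform_add M y z (t : R) :
  qform M (y + t *: z) = qform M y + t * (bil M y z + bil M z y) + t ^+ 2 * qform M z.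
Proof.
rewrite !qformE /bil.
have -> : \sum_i \sum_j (y + t *: z) i 0 * M i j * (y + t *: z) j 0 =
  \sum_i \sum_j (y i 0 * M i j * y j 0 + (t * (y i 0 * M i j * z j 0) +
   t * (z i 0 * M i j * y j 0)) + t ^+ 2 * (z i 0 * M i j * z j 0)).
  by apply: eq_bigr => i _; apply: eq_bigr => j _; rewrite !mxE; ring.
by rewrite !sum2D !sum2Z mulrDr.
Qed.

Lemma bil_sym M x y : M^T = M -> bil M x y = bil M y x.
Proof.
move=> sM; rewrite /bil exchange_big /=; apply: eq_bigr => i _; apply: eq_bigr => j _.
by rewrite -{1}sM mxE; ring.
Qed.

Lemma bil_ekl M (k : 'I_p) y : bil M (delta_mx k 0) y = \sum_j M k j * y j 0.
Proof.
rewrite /bil (bigD1 k) //=.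
rewrite [X in _ + X]big1 ?addr0.
  by apply: eq_bigr => j _; rewrite mxE !eqxx mul1r.
by move=> i ik; apply: big1 => j _; rewrite mxE (negbTE ik) mul0r mul0r.
Qed.

Lemma bil_ekr M (k : 'I_p) y : bil M y (delta_mx k 0) = \sum_i y i 0 * M i k.
Proof.
rewrite /bil; apply: eq_bigr => i _.
rewrite (bigD1 k) //= [X in _ + X]big1 ?addr0; first by rewrite mxE !eqxx mulr1.
by move=> j jk; rewrite mxE (negbTE jk) mulr0.
Qed.

Lemma qform_ek M (k : 'I_p) : qform M (delta_mx k 0) = M k k.
Proof.
rewrite qformE bil_ekl (bigD1 k) //= [X in _ + X]big1 ?addr0; first by rewrite mxE !eqxx mulr1.
by move=> j jk; rewrite mxE (negbTE jk) mulr0.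
Qed.

End L2.
Section L3.
Variable R : realType.
Variable p : nat.
Implicit Types (M P rho : 'M[R]_p) (x y z : 'cV[R]_p).

Lemma sum_delta (f : 'I_p -> R) (a : 'I_p) :
  \sum_j f j * (delta_mx a 0 : 'cV[R]_p) j 0 = f a.
Proof.
rewrite (bigD1 a) //= [X in _ + X]big1 ?addr0; first by rewrite mxE !eqxx mulr1.
by move=> j ja; rewrite mxE (negbTE ja) mulr0.
Qed.

Lemma psd_frob P rho : psd P -> psd rho -> rho^T = rho -> 0 <= frob P rho.
Proof.
move=> pP.
suff aux : forall m rho, rho^T = rho -> psd rho ->
   (forall i j : 'I_p, (i < p - m)%N -> rho i j = 0) -> 0 <= frob P rho.
  by move=> pR sR; apply: (aux p) => // i j; rewrite subnn.
elim=> [|m IH] {}rho sR pR z.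
  rewrite frobE big1 // => i _; rewrite big1 // => j _.
  by rewrite z ?mulr0 // subn0.
have sE i j : rho j i = rho i j by rewrite -{1}sR mxE.
have [hm|hm] := leqP p m.
  apply: IH => // i j; have -> : (p - m = 0)%N by apply/eqP; rewrite subn_eq0.
  by [].
have hk : (p - m.+1 < p)%N by rewrite ltn_subrL /=; apply: (leq_ltn_trans _ hm).
set k := Ordinal hk.
have ilt (i : 'I_p) : (i < p - m)%N = (i < k)%N || (i == k).
  rewrite -val_eqE /=; apply/idP/idP => H; lia.
set c := rho k k.
have c0 : 0 <= c by have := pR (delta_mx k 0); rewrite qform_ek.
have [cz|cp] := eqVneq c 0.
  have rk j : rho k j = 0.
    apply/eqP/negP => /negP rne.
    set r := rho k j.
    set t := - (rho j j + 1) / (2 * r).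
    have := pR (delta_mx j 0 + t *: delta_mx k 0).
    rewrite qform_add !qform_ek -/c cz.
    rewrite (bil_sym _ _ sR) bil_ekl sum_delta -/r.
    have -> : rho j j + t * (r + r) + t ^+ 2 * 0 = -1.
      rewrite /t; field; exact: rne.
    lra.
  apply: IH => // i j; rewrite ilt => /orP[ik|/eqP->]; last exact: rk.
  by apply: z; rewrite -/(nat_of_ord k).
have cpos : 0 < c by rewrite lt0r cp c0.
set rho' := \matrix_(i, j) (rho i j - rho i k * rho k j / c).
have sR' : rho'^T = rho'.
  by apply/matrixP => i j; rewrite !mxE sE (sE k i) (sE k j); ring.
have pR' : psd rho'.
  move=> x.
  set s := \sum_j rho k j * x j 0.
  have := pR (x + (- s / c) *: delta_mx k 0).
  rewrite qform_add qform_ek -/c (bil_sym _ _ sR) bil_ekl -/s.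
  have -> : qform rho' x = qform rho x - s ^+ 2 / c.
    rewrite !qformE /bil.
    have -> : s ^+ 2 / c = \sum_i \sum_j (x i 0 * (rho i k * rho k j / c) * x j 0).
      rewrite expr2 -mulrA {1}/s mulr_suml; apply: eq_bigr => i _.
      rewrite /s mulr_suml mulr_sumr; apply: eq_bigr => j _.
      by rewrite sE; field; rewrite cp.
    rewrite -sum2N -sum2D; apply: eq_bigr => i _; apply: eq_bigr => j _.
    by rewrite mxE; ring.
  have -> : qform rho x + - s / c * (s + s) + (- s / c) ^+ 2 * c = qform rho x - s ^+ 2 / c.
    by field; rewrite cp.
  by [].
have z' : forall i j : 'I_p, (i < p - m)%N -> rho' i j = 0.
  move=> i j; rewrite ilt mxE => /orP[ik|/eqP->].
    by rewrite (z i j ik) (z i k ik) !mul0r subrr.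
  by rewrite -/c mulrAC divff // mul1r subrr.
have := IH rho' sR' pR' z'.
have Pb : 0 <= qform P (\col_i rho i k) by apply: pP.
have -> : frob P rho' = frob P rho - qform P (\col_i rho i k) / c.
  rewrite !frobE qformE /bil mulr_suml -sumrB; apply: eq_bigr => i _.
  rewrite mulr_suml -sumrB; apply: eq_bigr => j _.
  by rewrite !mxE (sE k j); field; rewrite cp.
have : 0 <= qform P (\col_i rho i k) / c by rewrite divr_ge0.
lra.
Qed.

End L3.
Section L4.
Variable R : realType.
Variable p : nat.
Implicit Types (M P rho : 'M[R]_p) (x y z : 'cV[R]_p).

Lemma dotC x y : dot x y = dot y x.
Proof. by apply: eq_bigr => i _; rewrite mulrC. Qed.

Lemma dotD x y z : dot x (y + z) = dot x y + dot x z.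
Proof. by rewrite /dot -big_split; apply: eq_bigr => i _; rewrite mxE mulrDr. Qed.

Lemma dotN x y : dot x (- y) = - dot x y.
Proof. by rewrite /dot -sumrN; apply: eq_bigr => i _; rewrite mxE mulrN. Qed.

Lemma dotB x y z : dot x (y - z) = dot x y - dot x z.
Proof. by rewrite dotD dotN. Qed.

Lemma dotZ x y (a : R) : dot x (a *: y) = a * dot x y.
Proof. by rewrite /dot mulr_sumr; apply: eq_bigr => i _; rewrite mxE; ring. Qed.

Lemma dot_sum (I : finType) (P : pred I) x (c : I -> R) (y : I -> 'cV[R]_p) :
  dot x (\sum_(n | P n) c n *: y n) = \sum_(n | P n) c n * dot x (y n).
Proof.
rewrite /dot; under eq_bigr do rewrite summxE mulr_sumr.
rewrite exchange_big /=; apply: eq_bigr => n _; rewrite mulr_sumr.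
by apply: eq_bigr => i _; rewrite mxE; ring.
Qed.

Lemma dot_self x : dot x x = norm2 x ^+ 2.
Proof. by rewrite norm2_sqr; apply: eq_bigr => i _; rewrite expr2. Qed.

Lemma norm2_eq0 x : norm2 x = 0 -> x = 0.
Proof.
move=> h; have : norm2 x ^+ 2 = 0 by rewrite h expr0n.
rewrite norm2_sqr => /eqP; rewrite psumr_eq0 => [/allP H|i _]; last exact: sqr_ge0.
apply/matrixP => i j; rewrite (ord1 j) mxE.
by have := H i (mem_index_enum i); rewrite implyTb sqrf_eq0 => /eqP.
Qed.

Lemma norm2Z (a : R) x : norm2 (a *: x) = `|a| * norm2 x.
Proof.
rewrite /norm2 -sqrtr_sqr -sqrtrM ?sqr_ge0 // mulr_sumr.
by congr Num.sqrt; apply: eq_bigr => i _; rewrite mxE exprMn.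
Qed.

Lemma norm2_0 : norm2 (0 : 'cV[R]_p) = 0.
Proof. by rewrite /norm2 big1 ?sqrtr0 // => i _; rewrite mxE expr0n. Qed.

Lemma qform_dot M x : qform M x = dot x (M *m x).
Proof.
rewrite qformE /bil /dot; apply: eq_bigr => i _; rewrite mxE mulr_sumr.
by apply: eq_bigr => j _; rewrite mulrA.
Qed.

Lemma opnorm_bounded M : has_ubound [set norm2 (M *m x) | x in [set x : 'cV[R]_p | norm2 x <= 1]].
Proof.
exists (Num.sqrt (\sum_i \sum_j M i j ^+ 2)) => _ [x /= hx <-].
rewrite /norm2 ler_sqrt; last by apply: sumr_ge0 => i _; apply: sumr_ge0 => j _; exact: sqr_ge0.
apply: ler_sum => i _; rewrite mxE.
have h := @CS _ 'I_p predT (fun j => M i j) (fun j => x j 0).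
apply: (le_trans h); rewrite -[X in _ <= X]mulr1 ler_wpM2l //.
  by apply: sumr_ge0 => j _; exact: sqr_ge0.
have : norm2 x ^+ 2 <= 1.
  by rewrite -(expr1n _ 2) ler_pXn2r // ?nnegrE ?norm2_ge0.
by rewrite norm2_sqr.
Qed.

Lemma opnorm_ge M x : norm2 x <= 1 -> norm2 (M *m x) <= opnorm M.
Proof. by move=> hx; apply: ub_le_sup; [exact: opnorm_bounded | exists x]. Qed.

Lemma opnorm_ge0 M : 0 <= opnorm M.
Proof.
by have := @opnorm_ge M 0; rewrite mulmx0 norm2_0; apply; exact: ler01.
Qed.

Lemma opnorm_le M x : norm2 (M *m x) <= opnorm M * norm2 x.
Proof.
have [/norm2_eq0 ->|nz] := eqVneq (norm2 x) 0.
  by rewrite mulmx0 norm2_0 mulr0.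
have np : 0 < norm2 x by rewrite lt0r nz norm2_ge0.
have := @opnorm_ge M ((norm2 x)^-1 *: x).
rewrite norm2Z -scalemxAr norm2Z ger0_norm ?invr_ge0 ?norm2_ge0 //.
rewrite mulVf // lexx => /(_ isT) h.
by rewrite -ler_pdivrMr // mulrC.
Qed.

Lemma qform_le M x : qform M x <= opnorm M * norm2 x ^+ 2.
Proof.
rewrite qform_dot; apply: (le_trans (dot_le _ _)).
have := opnorm_le M x; have := norm2_ge0 x; nra.
Qed.

Lemma qform_S (I : finType) (P : pred I) (c : I -> R) (y : I -> 'cV[R]_p) x :
  qform (\sum_(n | P n) c n *: (y n *m (y n)^T)) x = \sum_(n | P n) c n * dot x (y n) ^+ 2.
Proof.
rewrite qformE /bil.
have -> : \sum_(n | P n) c n * dot x (y n) ^+ 2 =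
    \sum_(n | P n) \sum_i \sum_j c n * (x i 0 * y n i 0) * (x j 0 * y n j 0).
  apply: eq_bigr => n _; rewrite expr2 {1}/dot mulr_suml mulr_sumr.
  apply: eq_bigr => i _; rewrite /dot !mulr_sumr; apply: eq_bigr => j _; ring.
rewrite [RHS]exchange_big /=; apply: eq_bigr => i _.
rewrite [RHS]exchange_big /=; apply: eq_bigr => j _.
rewrite summxE mulr_sumr mulr_suml; apply: eq_bigr => n _.
by rewrite !mxE big_ord1 !mxE; ring.
Qed.

End L4.
Section Scal.
Variable R : realType.

Lemma scal1 (e nr ni no w wout : R) : 0 < e -> e < 1/3 -> 0 < nr -> ni + no = nr ->
  no <= e * nr -> 0 <= w -> w * ((1-e)*nr) <= 1 -> wout * ((1-e)*nr) <= no ->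
  w / (1 - wout) <= 1 / ((1 - e/(1-e)) * ni).
Proof.
move=> e0 e1 nr0 hs hno w0 hw hwo.
have X0 : 0 < (1-e)*nr by apply: mulr_gt0 => //; lra.
have wo1 : wout * ((1-e)*nr) < (1 - e) * nr.
  apply: (le_lt_trans hwo); nra.
have wo2 : wout < 1 by rewrite -(ltr_pM2r X0) mul1r.
have ni0 : 0 < ni by nra.
have E : 1 - e / (1 - e) = (1 - 2 * e) / (1 - e) by field; lra.
have K0 : 0 < (1 - 2 * e) / (1 - e) * ni.
  by apply: mulr_gt0 => //; apply: divr_gt0; lra.
rewrite E ler_pdivrMr; last lra.
rewrite mul1r mulrC ler_pdivlMr //.
have key : w * ((1 - 2 * e) * ni) * ((1-e)*nr) <= (1 - wout) * (1 - e) * ((1-e)*nr).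
  have h1 : w * ((1 - 2 * e) * ni) * ((1-e)*nr) <= (1 - 2 * e) * ni.
    have -> : w * ((1 - 2 * e) * ni) * ((1-e)*nr) = (w * ((1-e)*nr)) * ((1 - 2 * e) * ni) by ring.
    rewrite -[X in _ <= X]mul1r ler_wpM2r //; apply: mulr_ge0; lra.
  apply: (le_trans h1); nra.
have key2 : w * ((1 - 2 * e) * ni) <= (1 - wout) * (1 - e).
  by rewrite -(ler_pM2r X0).
have -> : w * ((1 - 2 * e) / (1 - e) * ni) = w * ((1 - 2 * e) * ni) / (1 - e) by field; lra.
by rewrite ler_pdivrMr; lra.
Qed.
End Scal.
Section SqExp.
Variable R : realType.
Lemma sq_expand (I : finType) (P : pred I) (c a : I -> R) (b : R) :
  \sum_(n | P n) c n * (a n + b) ^+ 2 =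
   \sum_(n | P n) c n * a n ^+ 2 + 2 * b * \sum_(n | P n) c n * a n
   + b ^+ 2 * \sum_(n | P n) c n.
Proof. by rewrite !mulr_sumr -!big_split /=; apply: eq_bigr => n _; ring. Qed.
End SqExp.

Section Main.
Variables (R : realType) (N p : nat) (eps : R) (g : 'I_N -> 'cV[R]_p) (Iin : {set 'I_N})
  (mug : 'cV[R]_p) (Sigmag : 'M[R]_p) (dmu dSigma : R).
Hypotheses (hN : (1 <= N)%N) (he0 : 0 < eps) (he1 : eps < 1/3)
  (hst : inlier_stable eps g Iin mug Sigmag dmu dSigma).

Local Notation NI := (#|Iin|%:R : R).
Local Notation NO := (#|~: Iin|%:R : R).
Local Notation NR := (N%:R : R).

Lemma card_split : NI + NO = NR.
Proof. by rewrite -natrD cardsC card_ord. Qed.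

Lemma NO_le : NO <= eps * NR.
Proof. by case: hst. Qed.

Lemma NR_pos : 0 < NR.
Proof. by rewrite ltr0n. Qed.

Lemma NI_ge : (1 - eps) * NR <= NI.
Proof. rewrite mulrBl mul1r; have := card_split; have := NO_le; move=> h1 h2; nra. Qed.

Lemma NI_pos : 0 < NI.
Proof. have := he1; have := he0 => ??.
have h : 0 < (1 - eps) * NR by apply: mulr_gt0; [lra|exact: NR_pos].
have := NI_ge; lra. Qed.

Lemma DeltaN_cap (w : 'I_N -> R) : DeltaN eps w -> forall n, 0 <= w n /\ w n * ((1 - eps) * NR) <= 1.
Proof.
have := he1; have := he0 => ??.
case=> _ h n; have [h1 h2] := h n ltac:(by rewrite inE); split => //.
have X0 : 0 < (1 - eps) * NR by apply: mulr_gt0; [lra | exact: NR_pos].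
by move: h2; rewrite cardsT card_ord ler_pdivlMr // mul1r.
Qed.

Lemma sum_split (f : 'I_N -> R) :
  \sum_n f n = \sum_(n in Iin) f n + \sum_(n in ~: Iin) f n.
Proof.
rewrite (bigID (mem Iin)) /=; congr (_ + _).
by apply: eq_bigl => n; rewrite !inE.
Qed.

Lemma DeltaN_sum (w : 'I_N -> R) : DeltaN eps w -> \sum_n w n = 1.
Proof. by case=> h _; rewrite -h; apply: eq_bigl => n; rewrite !inE. Qed.

Lemma Wout_le (w : 'I_N -> R) : DeltaN eps w -> (\sum_(n in ~: Iin) w n) * ((1 - eps) * NR) <= NO.
Proof.
move=> hw; rewrite mulr_suml.
apply: (@le_trans _ _ (\sum_(n in ~: Iin) (1 : R))).
  by apply: ler_sum => n _; case: (DeltaN_cap hw n).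
by rewrite sumr_const -[X in _ <= X]mulr1n.
Qed.

Lemma Win_pos (w : 'I_N -> R) : DeltaN eps w -> 0 < \sum_(n in Iin) w n.
Proof.
move=> hw; have := he1; have := he0 => ??.
have := Wout_le hw; have := NO_le; have := NR_pos.
have := DeltaN_sum hw.
rewrite sum_split.
set a := \sum_(n in Iin) w n; set b := \sum_(n in ~: Iin) w n.
move=> hs h1 h2 h3.
have hX : 0 < (1 - eps) * NR by apply: mulr_gt0; [lra|exact: NR_pos].
have h4 : eps * NR < (1 - eps) * NR by rewrite ltr_pM2r; [lra | exact: NR_pos].
have : b * ((1 - eps) * NR) < (1 - eps) * NR by lra.
move=> h5; have h6 : b < 1 by rewrite -(ltr_pM2r hX) mul1r.
lra.
Qed.

Lemma w_in_cap (w : 'I_N -> R) : DeltaN eps w ->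
  capped_simplex Iin (eps / (1 - eps)) (fun n => w n / \sum_(m in Iin) w m).
Proof.
move=> hw; have Wp := Win_pos hw; split.
  by rewrite -mulr_suml divff // gt_eqF.
move=> n nI; have [h0 h1] := DeltaN_cap hw n; split; first by rewrite divr_ge0 // ltW.
have := DeltaN_sum hw.
rewrite sum_split => hs.
have -> : \sum_(m in Iin) w m = 1 - \sum_(n in ~: Iin) w n by rewrite -hs; ring.
apply: (@scal1 _ eps NR NI NO) => //; [exact: NR_pos | exact: card_split | exact: NO_le | exact: Wout_le].
Qed.


Hypothesis hp : (0 < p)%N.

Definition wstar : 'I_N -> R := fun n => if n \in Iin then NI^-1 else 0.

Lemma wstar_in_sum : \sum_(n in Iin) wstar n = 1.
Proof.
rewrite (eq_bigr (fun _ => NI^-1)); last by move=> n nI; rewrite /wstar nI.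
by rewrite sumr_const -[X in X = _]mulr_natr mulVf // gt_eqF // NI_pos.
Qed.

Lemma wstar_sum (f : 'I_N -> R) :
  \sum_n wstar n * f n = \sum_(n in Iin) wstar n * f n.
Proof.
rewrite sum_split [X in _ + X]big1 ?addr0 // => n; rewrite !inE /wstar => /negbTE ->.
by rewrite mul0r.
Qed.

Lemma wstar_Delta : DeltaN eps wstar.
Proof.
have := he1; have := he0 => ??.
split.
  transitivity (\sum_n wstar n * 1).
    rewrite (eq_bigl predT); last by move=> n; rewrite !inE.
    by apply: eq_bigr => n _; rewrite mulr1.
  by rewrite wstar_sum; under eq_bigr do rewrite mulr1; exact: wstar_in_sum.
move=> n _; rewrite /wstar cardsT card_ord; case: ifP => _; last first.
  by split => //; apply: divr_ge0 => //; apply: mulr_ge0; [lra | exact: ler0n].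
have NIp := NI_pos; have X0 : 0 < (1 - eps) * NR by apply: mulr_gt0; [lra | exact: NR_pos].
split; first by rewrite invr_ge0 ltW.
rewrite ler_pdivlMr // mulrC ler_pdivrMr // mul1r; exact: NI_ge.
Qed.

Lemma wstar_cap : capped_simplex Iin (eps / (1 - eps)) wstar.
Proof.
have := he1; have := he0 => ??.
split; first exact: wstar_in_sum.
move=> n nI; rewrite /wstar nI; have NIp := NI_pos.
split; first by rewrite invr_ge0 ltW.
have E : 1 - eps / (1 - eps) = (1 - 2 * eps) / (1 - eps) by field; lra.
have c0 : 0 < (1 - 2 * eps) / (1 - eps) by apply: divr_gt0; lra.
rewrite E ler_pdivlMr; last exact: mulr_gt0.
have -> : NI^-1 * ((1 - 2 * eps) / (1 - eps) * NI) = (1 - 2 * eps) / (1 - eps).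
  by field; rewrite gt_eqF //=; lra.
rewrite ler_pdivrMr; lra.
Qed.

Lemma qformB (A B : 'M[R]_p) (x : 'cV[R]_p) : qform (A - B) x = qform A x - qform B x.
Proof. by rewrite !qform_dot mulmxBl dotB. Qed.

Lemma qform_scal (c : R) (x : 'cV[R]_p) : qform (c%:M) x = c * norm2 x ^+ 2.
Proof. by rewrite qform_dot mul_scalar_mx dotZ dot_self. Qed.

Lemma qformDs (A : 'M[R]_p) (c : R) (x : 'cV[R]_p) : qform (A + c%:M) x = qform A x + c * norm2 x ^+ 2.
Proof. by rewrite !qform_dot mulmxDl dotD -qform_dot -qform_dot qform_scal. Qed.

Lemma Sstar_le (mu x : 'cV[R]_p) :
  qform (Smat g wstar mu) x <=
  (opnorm Sigmag + dSigma + 2 * dmu * norm2 (mu - mug) + norm2 (mu - mug) ^+ 2) * norm2 x ^+ 2.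
Proof.
have [hmu hS] := (proj2 (proj2 (proj2 (proj2 (proj2 hst))))) wstar wstar_cap.
rewrite /Smat qform_S wstar_sum.
set e := norm2 (mu - mug); set nx := norm2 x.
set b := dot x (mug - mu).
have dE n : dot x (g n - mu) = dot x (g n - mug) + b.
  by rewrite /b -dotD addrA subrK.
under eq_bigr do rewrite dE.
rewrite (sq_expand _ wstar (fun n => dot x (g n - mug)) b).
rewrite wstar_in_sum mulr1.
rewrite -qform_S.
set M := \sum_(n in Iin) _.
have hQ : qform M x <= (opnorm Sigmag + dSigma) * nx ^+ 2.
  have := hS x; rewrite qformB subr_ge0 qformDs => h; apply: (le_trans h).
  by rewrite mulrDl lerD2r qform_le.
rewrite -dot_sum.
set m := dot x _.
have hm : `|m| <= nx * dmu.
  apply: (le_trans (dot_abs_le _ _)); apply: ler_wpM2l => //; exact: norm2_ge0.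
have hb : `|b| <= nx * e.
  have -> : b = - dot x (mu - mug) by rewrite /b -dotN opprB.
  rewrite normrN; exact: dot_abs_le.
have hbm : b * m <= (nx * e) * (nx * dmu).
  apply: (le_trans (ler_norm _)); rewrite normrM.
  apply: ler_pM => //; exact: normr_ge0.
have hb2 : b ^+ 2 <= (nx * e) ^+ 2.
  have := normr_ge0 b; have e2 : b ^+ 2 = `|b| ^+ 2 by rewrite real_normK ?num_real.
  rewrite e2; nra.
have : (opnorm Sigmag + dSigma + 2 * dmu * e + e ^+ 2) * nx ^+ 2 =
   (opnorm Sigmag + dSigma) * nx ^+ 2 + 2 * ((nx * e) * (nx * dmu)) + (nx * e) ^+ 2 by ring.
move=> ->; lra.
Qed.



Lemma Smat_psd (w : 'I_N -> R) (mu : 'cV[R]_p) : (forall n, 0 <= w n) -> psd (Smat g w mu).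
Proof.
move=> w0 x; rewrite /Smat qform_S; apply: sumr_ge0 => n _.
by apply: mulr_ge0 => //; exact: sqr_ge0.
Qed.

Definition e0 : 'cV[R]_p := delta_mx (Ordinal hp) 0.

Lemma rho0_density : density (e0 *m e0^T).
Proof.
split; first by rewrite trmx_mul trmxK.
split.
  move=> x; have := @qform_S R p 'I_1 predT (fun _ => 1) (fun _ => e0) x.
  by rewrite !big_ord1 scale1r mul1r => ->; exact: sqr_ge0.
rewrite /mxtrace; under eq_bigr do rewrite !mxE big_ord1 !mxE.
rewrite (bigD1 (Ordinal hp)) //= [X in _ + X]big1 ?addr0; first by rewrite ?eqxx /= ?mulr1.
by move=> i /negbTE ->; rewrite mul0r.
Qed.

Lemma sup_ge0' (E : set R) x : E x -> (forall y, E y -> 0 <= y) -> 0 <= sup E.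
Proof.
move=> Ex h; case: (pselect (has_ubound E)) => hu.
  by apply: (le_trans (h x Ex)); apply: ub_le_sup.
by rewrite sup_out // => -[_].
Qed.

Lemma frob_scalB (c : R) (S rho : 'M[R]_p) :
  frob (c%:M - S) rho = c * \tr rho - frob S rho.
Proof.
by rewrite /frob linearB /= tr_scalar_mx mulmxBl mul_scalar_mx linearB /= mxtraceZ.
Qed.

Lemma OPT_le (mu : 'cV[R]_p) :
  OPT eps g mu <= opnorm Sigmag + dSigma + 2 * dmu * norm2 (mu - mug) + norm2 (mu - mug) ^+ 2.
Proof.
set B := _ + _ + _ + _.
rewrite /OPT.
set G := fun w => [set frob (Smat g w mu) rho | rho in [set rho | density rho]].
have frob0 w rho : DeltaN eps w -> density rho -> 0 <= frob (Smat g w mu) rho.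
  move=> hw [sR [pR _]]; apply: psd_frob => //; apply: Smat_psd => n.
  by case: (DeltaN_cap hw n).
apply: (@le_trans _ _ (sup (G wstar))).
  apply: ge_inf; last by exists wstar => //; exact: wstar_Delta.
  exists 0 => _ [w hw <-]; apply: (@sup_ge0' _ (frob (Smat g w mu) (e0 *m e0^T))).
    by exists (e0 *m e0^T) => //; exact: rho0_density.
  by move=> _ [rho hr <-]; exact: frob0.
apply: ge_sup; first by exists (frob (Smat g wstar mu) (e0 *m e0^T)); exists (e0 *m e0^T) => //; exact: rho0_density.
move=> _ [rho hr <-].
have := hr => -[sR [pR tR]].
have : 0 <= frob (B%:M - Smat g wstar mu) rho.
  apply: psd_frob => // x; rewrite qformB qform_scal subr_ge0; exact: Sstar_le.
by rewrite frob_scalB tR mulr1 subr_ge0.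
Qed.



Lemma wCS1 (P : pred 'I_N) (w a : 'I_N -> R) : (forall i, P i -> 0 <= w i) ->
  (\sum_(i | P i) w i * a i) ^+ 2 <= (\sum_(i | P i) w i) * (\sum_(i | P i) w i * a i ^+ 2).
Proof.
move=> w0; have h := @wCS R _ P w a (fun _ => 1) w0.
have E1 : \sum_(i | P i) w i * a i * 1 = \sum_(i | P i) w i * a i.
  by apply: eq_bigr => i _; rewrite mulr1.
have E2 : \sum_(i | P i) w i * 1 ^+ 2 = \sum_(i | P i) w i.
  by apply: eq_bigr => i _; rewrite expr1n mulr1.
by rewrite E1 E2 mulrC in h.
Qed.

Lemma Dbound (mu : 'cV[R]_p) (w : 'I_N -> R) : DeltaN eps w ->
  norm2 (\sum_n w n *: g n - mug) <= dmu + alpha_eps eps * Num.sqrt (gammaS g w mu).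
Proof.
move=> hw.
have := he1; have := he0 => ??.
have [_ [_ [dmu0 [dS0 hI]]]] := proj2 hst.
set a := alpha_eps eps; set gam := gammaS g w mu.
have a0 : 0 <= a by exact: sqrtr_ge0.
have gam0 : 0 <= gam by exact: opnorm_ge0.
have sg0 : 0 <= Num.sqrt gam by exact: sqrtr_ge0.
have w0 n : 0 <= w n by case: (DeltaN_cap hw n).
have ws := DeltaN_sum hw.
have dE : \sum_n w n *: g n - mug = \sum_n w n *: (g n - mug).
  under [RHS]eq_bigr do rewrite scalerBr.
  by rewrite sumrB -scaler_suml ws scale1r.
rewrite dE; set d := \sum_n _.
set D := norm2 d.
have [D0|Dn] := eqVneq D 0.
  by rewrite D0; apply: addr_ge0 => //; apply: mulr_ge0.
have Dp : 0 < D by rewrite lt0r Dn norm2_ge0.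
set v := D^-1 *: d.
have nv : norm2 v = 1 by rewrite /v norm2Z ger0_norm ?invr_ge0 ?norm2_ge0 // mulVf.
have dvd : dot v d = D.
  rewrite /v dotC /dot.
  have -> : \sum_i d i 0 * (D^-1 *: d) i 0 = D^-1 * dot d d.
    by rewrite /dot mulr_sumr; apply: eq_bigr => i _; rewrite mxE; ring.
  by rewrite dot_self -/D expr2 mulrA mulVf // mul1r.
set t := fun n => dot v (g n - mug).
have DE : D = \sum_n w n * t n by rewrite -dvd /d dot_sum.
set c := dot v (mug - mu).
have xE n : dot v (g n - mu) = t n + c by rewrite /t /c -dotD addrA subrK.
have hq : \sum_n w n * (t n + c) ^+ 2 <= gam.
  have := qform_le (Smat g w mu) v; rewrite nv expr1n mulr1 /Smat qform_S.
  by under eq_bigr do rewrite xE.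
have sumx : \sum_n w n * (t n + c) = D + c.
  rewrite DE -[c in RHS]mul1r -ws mulr_suml -big_split /=.
  by apply: eq_bigr => n _; ring.
have hV : \sum_n w n * (t n - D) ^+ 2 <= gam.
  have -> : \sum_n w n * (t n - D) ^+ 2 = \sum_n w n * ((t n + c) + (- (c + D))) ^+ 2.
    by apply: eq_bigr => n _; congr (_ * _ ^+ 2); ring.
  rewrite sq_expand sumx ws mulr1.
  have -> : \sum_n w n * (t n + c) ^+ 2 + 2 * - (c + D) * (D + c) + (- (c + D)) ^+ 2 =
     \sum_n w n * (t n + c) ^+ 2 - (c + D) ^+ 2 by ring.
  have := sqr_ge0 (c + D); lra.
set Win := \sum_(n in Iin) w n.
set Wout := \sum_(n in ~: Iin) w n.
have Winp : 0 < Win := Win_pos hw.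
have Wsum : Win + Wout = 1 by rewrite -ws sum_split.
have Wout0 : 0 <= Wout by apply: sumr_ge0.
have hin : \sum_(n in Iin) w n * t n <= Win * dmu.
  have [h1 _] := hI _ (w_in_cap hw).
  have := dot_le v (\sum_(n in Iin) (w n / Win) *: (g n - mug)).
  rewrite nv mul1r dot_sum => h2.
  have := le_trans h2 h1.
  have -> : \sum_(n in Iin) w n / Win * dot v (g n - mug) = (\sum_(n in Iin) w n * t n) / Win.
    by rewrite mulr_suml; apply: eq_bigr => n _; rewrite /t; field; rewrite gt_eqF.
  by rewrite ler_pdivrMr // mulrC.
set K := \sum_(n in Iin) w n * (t n - D).
have KE : K = \sum_(n in Iin) w n * t n - D * Win.
  rewrite /K /Win mulr_sumr -sumrB; apply: eq_bigr => n _; ring.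
have tot : \sum_n w n * (t n - D) = 0.
  have -> : \sum_n w n * (t n - D) = \sum_n w n * t n - D * \sum_n w n.
    rewrite mulr_sumr -sumrB; apply: eq_bigr => n _; ring.
  by rewrite ws -DE mulr1 subrr.
have KoE : \sum_(n in ~: Iin) w n * (t n - D) = - K.
  by move: tot; rewrite sum_split -/K => h; apply/eqP; rewrite -addr_eq0 addrC h.
set Vin := \sum_(n in Iin) w n * (t n - D) ^+ 2.
set Vout := \sum_(n in ~: Iin) w n * (t n - D) ^+ 2.
have VE : Vin + Vout <= gam by rewrite /Vin /Vout -sum_split.
have Vin0 : 0 <= Vin by apply: sumr_ge0 => n _; apply: mulr_ge0 => //; exact: sqr_ge0.
have Vout0 : 0 <= Vout by apply: sumr_ge0 => n _; apply: mulr_ge0 => //; exact: sqr_ge0.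
have c1 : K ^+ 2 <= Win * Vin by apply: wCS1.
have c2 : K ^+ 2 <= Wout * Vout.
  by rewrite -sqrrN -KoE; apply: wCS1.
have c3 : K ^+ 2 <= Win * Wout * gam.
  have e1 : K ^+ 2 = K ^+ 2 * Win + K ^+ 2 * Wout by rewrite -mulrDr Wsum mulr1.
  have e2 : K ^+ 2 * Win <= Win * Wout * Vout.
    by rewrite mulrC -mulrA; apply: ler_wpM2l => //; exact: ltW.
  have e3 : K ^+ 2 * Wout <= Win * Wout * Vin.
    by rewrite mulrC (mulrC Win) -mulrA; apply: ler_wpM2l.
  have e4 : Win * Wout * (Vin + Vout) <= Win * Wout * gam.
    by apply: ler_wpM2l => //; apply: mulr_ge0 => //; exact: ltW.
  rewrite e1; lra.
have hWo : Wout * (1 - eps) <= eps.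
  have := Wout_le hw; have := NO_le; have NRp := NR_pos => h1; rewrite -/Wout => h2.
  have : Wout * (1 - eps) * NR <= eps * NR by rewrite -mulrA; lra.
  by rewrite ler_pM2r.
have a2 : a ^+ 2 = eps / (1 - 2 * eps).
  by rewrite /a /alpha_eps sqr_sqrtr // divr_ge0 //; lra.
have hWa : Wout <= a ^+ 2 * Win.
  rewrite a2 -(ler_pM2r (_ : 0 < 1 - 2 * eps)); last lra.
  have -> : eps / (1 - 2 * eps) * Win * (1 - 2 * eps) = eps * Win by field; lra.
  have : Win = 1 - Wout by lra.
  move=> ->; nra.
have [Dle|Dgt] := lerP D dmu.
  have : 0 <= a * Num.sqrt gam by apply: mulr_ge0.
  lra.
have Kn : K <= - (Win * (D - dmu)) by rewrite KE; nra.
have K2 : (Win * (D - dmu)) ^+ 2 <= K ^+ 2.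
  have h0 : 0 <= Win * (D - dmu) by apply: mulr_ge0; [exact: ltW | lra].
  nra.
have h5 : Win * (D - dmu) ^+ 2 <= Wout * gam.
  rewrite -(ler_pM2l Winp); move: K2 c3; rewrite exprMn expr2 => K2 c3.
  have : Win * Win * (D - dmu) ^+ 2 <= Win * Wout * gam by rewrite -expr2 -exprMn; lra.
  by rewrite !mulrA.
have h6 : (D - dmu) ^+ 2 <= (a * Num.sqrt gam) ^+ 2.
  rewrite exprMn [Num.sqrt gam ^+ 2]sqr_sqrtr //.
  rewrite -(ler_pM2l Winp).
  have : Wout * gam <= a ^+ 2 * Win * gam by apply: ler_wpM2r.
  have -> : Win * (a ^+ 2 * gam) = a ^+ 2 * Win * gam by ring.
  lra.
have := sqr_le_abs (mulr_ge0 a0 sg0) h6.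
lra.
Qed.

End Main.
Unset Implicit Arguments.

Theorem mainTheorem11 (R : realType) (N p : nat) (eps : R) (g : 'I_N -> 'cV[R]_p)
  (T : nat) (Iin : {set 'I_N}) (mug : 'cV[R]_p) (Sigmag : 'M[R]_p) (dmu dSigma : R)
  (muhat : nat -> 'cV[R]_p) (wbar : nat -> 'I_N -> R) :
  (1 <= N)%N -> (2 <= p)%N -> 0 < eps -> eps < 1 / 3 ->
  0 < nuG g ->
  4 * Num.max (ln (1 / (1 - eps))) (ln p%:R) <= T%:R ->
  inlier_stable eps g Iin mug Sigmag dmu dSigma ->
  in_conv g (muhat 1%N) ->
  (forall s, (1 <= s)%N -> DeltaN eps (wbar s)) ->
  (forall s, (1 <= s)%N ->
     gammaS g (wbar s) (muhat s) <= OPT eps g (muhat s) + deltaT eps (nuG g) p T) ->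
  (forall s, (1 <= s)%N -> muhat s.+1 = \sum_n wbar s n *: g n) ->
  let e := fun s => norm2 (muhat s - mug) in
  let a := alpha_eps eps in
  let Rt := (1 + a) * dmu
            + a * Num.sqrt (opnorm Sigmag + dSigma + deltaT eps (nuG g) p T) in
  (forall s, (1 <= s)%N -> e s.+1 <= a * e s + Rt) /\
  (forall s, (1 <= s)%N ->
     e s <= a ^+ s.-1 * e 1%N + (1 - a ^+ s.-1) / (1 - a) * Rt) /\
  limn_sup e <= Rt / (1 - a).
Proof.
move=> hN hp2 he0 he1 hnu _ hst _ hD hG hmu e a Rt.
have hp : (0 < p)%N by apply: leq_trans hp2.
have [_ [_ [dmu0 [dS0 _]]]] := proj2 hst.
set dT := deltaT eps (nuG g) p T.
have dT0 : 0 <= dT.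
  rewrite /dT /deltaT; apply: mulr_ge0; first by apply: mulr_ge0 => //; exact: ltW.
  by apply: addr_ge0; exact: sqrtr_ge0.
have a0 : 0 <= a by exact: sqrtr_ge0.
have a1 : a < 1.
  rewrite /a /alpha_eps -[X in _ < X]sqrtr1 ltr_sqrt ?ltr01 //.
  by rewrite ltr_pdivrMr; lra.
set A := opnorm Sigmag + dSigma.
have A0 : 0 <= A by apply: addr_ge0 => //; exact: opnorm_ge0.
set s0 := Num.sqrt (A + dT).
have s00 : 0 <= s0 by exact: sqrtr_ge0.
have s0E : s0 ^+ 2 = A + dT by rewrite sqr_sqrtr //; lra.
have e0 s : 0 <= e s by exact: norm2_ge0.
have Rt0 : 0 <= Rt.
  by rewrite /Rt; apply: addr_ge0; apply: mulr_ge0 => //; rewrite ?sqrtr_ge0 //; lra.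
have step : forall s, (1 <= s)%N -> e s.+1 <= a * e s + Rt.
  move=> s hs.
  have hDb := Dbound hN he0 he1 hst (muhat s) (hD s hs).
  rewrite -hmu // in hDb.
  set gam := gammaS g (wbar s) (muhat s) in hDb.
  have hg : gam <= A + 2 * dmu * e s + e s ^+ 2 + dT.
    apply: (le_trans (hG s hs)); rewrite -/dT.
    have := OPT_le hN he0 he1 hst hp (muhat s); rewrite -/A.
    rewrite /e; lra.
  have hsq : Num.sqrt gam <= s0 + e s + dmu.
    apply: sqr_le_abs; first by have := e0 s; lra.
    rewrite sqr_sqrtr; last by apply: opnorm_ge0.
    have := e0 s; nra.
  have := ler_wpM2l a0 hsq.
  rewrite /Rt /e -/dT -/A -/s0 /= in hDb *.
  move: hDb; rewrite -/a; nra.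
have bnd : forall s, (1 <= s)%N -> e s <= a ^+ s.-1 * e 1%N + (1 - a ^+ s.-1) / (1 - a) * Rt.
  elim=> [//|s IH] _.
  case: s IH => [_|s IH].
    by rewrite /= expr0 mul1r subrr !mul0r addr0.
  have := step s.+1 isT; have := IH isT => h1 h2.
  rewrite /= in h1 h2 *.
  apply: (le_trans h2).
  have -> : a ^+ s.+1 * e 1%N + (1 - a ^+ s.+1) / (1 - a) * Rt =
     a * (a ^+ s * e 1%N + (1 - a ^+ s) / (1 - a) * Rt) + Rt.
    by rewrite exprS; field; lra.
  by rewrite lerD2r; apply: ler_wpM2l.
split => //; split => //.
set C := Rt / (1 - a).
have C0 : 0 <= C by apply: divr_ge0 => //; lra.
have bnd2 : forall s, (1 <= s)%N -> e s <= a ^+ s.-1 * e 1%N + C.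
  move=> s hs; apply: (le_trans (bnd s hs)); rewrite lerD2l /C.
  rewrite mulrC mulrA ler_pdivrMr; last lra.
  rewrite mulrC -mulrA mulVf ?mulr1; last lra.
  have : 0 <= a ^+ s.-1 by exact: exprn_ge0.
  have := Rt0; nra.
have eb : forall n, e n <= e 0%N + e 1%N + C.
  move=> n; case: n => [|n]; first by have := e0 1%N; lra.
  apply: (le_trans (bnd2 n.+1 isT)) => /=.
  have : a ^+ n * e 1%N <= e 1%N.
    rewrite -[X in _ <= X]mul1r; apply: ler_wpM2r => //; apply: exprn_ile1 => //; exact: ltW.
  have := e0 0%N; lra.
have be : bounded_fun e.
  rewrite /= /bounded_near; near=> M => n _ /=.
  rewrite ger0_norm //; apply: (le_trans (eb n)).
  near: M; apply: nbhs_pinfty_ge; exact: num_real.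
rewrite limn_supE //.
have hl := bounded_fun_has_lbound_sups be.
have hk : forall k, inf (range (sups e)) <= a ^+ k * e 1%N + C.
  move=> k; apply: (le_trans (ge_inf hl (ex_intro2 _ _ k.+1 I erefl))) => /=.
  apply: ge_sup; first by exists (e k.+1); exists k.+1 => //=.
  move=> _ [j /= hj <-]; have hj1 : (0 < j)%N by apply: leq_ltn_trans hj.
  apply: (le_trans (bnd2 j hj1)).
  rewrite lerD2r; apply: ler_wpM2r => //; apply: ler_wiXn2l => //; [exact: ltW|].
  by case: j hj hj1.
have cv : (fun k => a ^+ k * e 1%N + C : R^o) @ \oo --> (C : R^o).
  rewrite -[X in _ --> X]add0r; apply: cvgD; last exact: cvg_cst.
  rewrite -(mul0r (e 1%N)); apply: cvgMr_tmp; apply: cvg_expr.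
  by rewrite ger0_norm.
rewrite -(cvg_lim _ cv) //; apply: limr_ge; first exact: (cvgP _ cv).
by near=> k; apply: hk.
Unshelve. all: by end_near.
Qed.
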